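(* Let $p_1\equiv p_2\equiv1\pmod4$ be primes, $d=2p_1p_2$, and let $\varepsilon_d=x+y\sqrt d$ be the fundamental unit of $\mathbb{Q}(\sqrt d)$. If $N(\varepsilon_d)=-1$, then there exist $y_1,y_2\in\mathbb{Z}[i]$ such that, for a suitable choice of sign $\pm$ (with $\mp$ the opposite sign) and of the square roots, $\sqrt{\varepsilon_d}$ equals one of (1) $\tfrac12\big[y_1(1+i)\sqrt{(1\pm i)\pi_1\pi_3}+y_2(1-i)\sqrt{(1\mp i)\pi_2\pi_4}\big]$, or (2) $\tfrac12\big[y_1(1+i)\sqrt{(1\pm i)\pi_1\pi_4}+y_2(1-i)\sqrt{(1\mp i)\pi_2\pi_3}\big]$.
   Context: $i=\sqrt{-1}$. Write $p_1=e^2+4f^2$, $p_2=g^2+4h^2$ with integers $e,f,g,h$, and set $\pi_1=e+2if$, $\pi_2=e-2if$, $\pi_3=g+2ih$, $\pi_4=g-2ih$ in $\mathbb{Z}[i]$, so that $p_1=\pi_1\pi_2$ and $p_2=\pi_3\pi_4$. $N$ denotes the norm from $\mathbb{Q}(\sqrt d)$ to $\mathbb{Q}$. *)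

(* Defs.v *)
From HB Require Import structures.
From mathcomp Require Import all_boot all_order all_algebra all_field.
Set Implicit Arguments. Unset Strict Implicit. Unset Printing Implicit Defensive.
Import Order.TTheory GRing.Theory Num.Theory.
Local Open Scope ring_scope.

Definition gauss_int (z : algC) : Prop :=
  exists a b : int, z = a%:~R + b%:~R * 'i.

Definition in_Qsqrt (d : int) (u : algC) : Prop :=
  exists a b : rat, u = ratr a + ratr b * sqrtC d%:~R.

Definition Qsqrt_unit (d : int) (u : algC) : Prop :=
  in_Qsqrt d u /\ u \in Aint /\ u != 0 /\ u^-1 \in Aint.

Definition fundamental_unit (d : int) (eps : algC) : Prop :=
  Qsqrt_unit d eps /\ 1 < eps /\
  forall u, Qsqrt_unit d u -> 1 < u -> eps <= u.

Definition Qsqrt_norm_is (d : int) (u : algC) (n : rat) : Prop :=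
  exists a b : rat, u = ratr a + ratr b * sqrtC d%:~R /\
    a ^+ 2 - d%:~R * b ^+ 2 = n.

(* Main.v *)
Require Import Defs.
From HB Require Import structures.
From mathcomp Require Import all_boot all_order all_algebra all_field.
Import Order.TTheory GRing.Theory Num.Theory.
Local Open Scope ring_scope.
From mathcomp Require Import zify ring lra.

Lemma sq_coprime (a b c : nat) : coprime a b -> (a * b = c * c)%N ->
  exists m, a = (m * m)%N.
Proof.
move=> cab habc; exists (gcdn a c).
have -> : (gcdn a c * gcdn a c = a * gcdn (gcdn a c) (gcdn c b))%N.
  rewrite muln_gcdl !muln_gcdr -habc.
  by rewrite (mulnC c a).
have -> : gcdn (gcdn a c) (gcdn c b) = 1%N.
  apply/eqP; rewrite -dvdn1 -(eqP cab); rewrite dvdn_gcd; apply/andP; split.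
  - exact: dvdn_trans (dvdn_gcdl _ _) (dvdn_gcdl _ _).
  - exact: dvdn_trans (dvdn_gcdr _ _) (dvdn_gcdr _ _).
by rewrite muln1.
Qed.

Local Close Scope ring_scope.
Lemma pyth_nat (U V N : nat) : odd U -> N * N = U * U + V * V -> coprime U V ->
  exists m k, U + k * k = m * m /\ V = 2 * m * k.
Proof.
move=> oU E cUV.
have oddsq : forall n, odd (n * n) = odd n by move=> n; rewrite oddM andbb.
have oV : ~~ odd V.
  apply/negP => oV.
  have oN : odd N = false by rewrite -oddsq E oddD !oddsq oU oV.
  have hN : N = 2 * N./2 by lia.
  have hU : U = 2 * U./2 + 1 by lia.
  have hV : V = 2 * V./2 + 1 by lia.
  move: E; rewrite hN hU hV; set a := N./2; set b := U./2; set c := V./2.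
  move=> E; have : 4 * (a * a) = 4 * (b * b) + 4 * b + 4 * (c * c) + 4 * c + 2.
    by apply: etrans (etrans _ E) _; ring.
  lia.
have oN : odd N by rewrite -oddsq E oddD !oddsq oU (negbTE oV).
set w := V./2; have hV : V = 2 * w by lia.
have leUN : U <= N.
  rewrite leqNgt; apply/negP => lt; have : N * N < U * U by apply: ltn_mul.
  lia.
set B := (N - U)./2.
have hN : N = U + 2 * B.
  have : ~~ odd (N - U) by rewrite oddB // oN oU.
  lia.
have EB : B * (U + B) = w * w.
  have : 4 * (B * (U + B)) = 4 * (w * w).
    have : (U + 2 * B) * (U + 2 * B) = U * U + (2 * w) * (2 * w) by rewrite -hN -hV.
    move=> H; apply/eqP; rewrite -(eqn_add2l (U * U)); apply/eqP.
    by apply: etrans (etrans _ H) _; ring.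
  lia.
have cB : coprime B (U + B).
  rewrite /coprime; set g := gcdn B (U + B).
  have gB : g %| B by apply: dvdn_gcdl.
  have gUB : g %| U + B by apply: dvdn_gcdr.
  have gU : g %| U by rewrite -(dvdn_addl U gB).
  have gw : g %| w * w by rewrite -EB; apply: dvdn_mulr.
  have cUw : coprime U (w * w).
    rewrite coprimeMr andbb; apply: coprime_dvdr cUV.
    by rewrite hV dvdn_mull.
  by rewrite -dvdn1 -(eqP cUw) dvdn_gcd gU gw.
have [k hk] := sq_coprime _ _ _ cB EB.
have [m hm] : exists m, U + B = m * m.
  apply: (@sq_coprime _ B w); first by rewrite coprime_sym.
  by rewrite mulnC.
exists m, k; split; first by rewrite -hk.
have : w * w = (m * k) * (m * k) by rewrite -EB hm hk; ring.
move=> H; have : w = m * k by apply/eqP; rewrite -eqn_sqr -!mulnn H.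
lia.
Qed.

Local Open Scope ring_scope.
Lemma abs_sq (x : int) : Posz (absz x * absz x)%N = x * x.
Proof.
have [->|->] : x = Posz (absz x) \/ x = - Posz (absz x) by lia.
  by [].
by rewrite abszN mulrNN.
Qed.

Lemma pyth_int (u v n P Q : int) : u * P + v * Q = 1 -> u * u + v * v = n * n ->
  exists r t : int, (u = r * r - t * t /\ v = 2 * r * t) \/
                    (u = - (2 * r * t) /\ v = r * r - t * t).
Proof.
move=> Bz E.
set U := absz u; set V := absz v; set N := absz n.
have EN : (N * N = U * U + V * V)%N.
  apply/eqP; rewrite -eqz_nat PoszD !abs_sq E //.
have cUV : coprime U V.
  rewrite /coprime; set g := gcdn U V.
  have gu : (Posz g %| u)%Z by apply: dvdn_gcdl.
  have gv : (Posz g %| v)%Z by apply: dvdn_gcdr.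
  have : (Posz g %| u * P + v * Q)%Z by rewrite rpredD // dvdz_mulr.
  by rewrite Bz dvdz1.
have hu : u = Posz U \/ u = - Posz U by lia.
have hv : v = Posz V \/ v = - Posz V by lia.
have oddsq : forall n, odd (n * n) = odd n by move=> n0; rewrite oddM andbb.
case oU: (odd U); case oV: (odd V).
- exfalso.
  have oN : odd N = false by rewrite -oddsq EN oddD !oddsq oU oV.
  have hN : N = (2 * N./2)%N by lia.
  have hU : U = (2 * U./2 + 1)%N by lia.
  have hV : V = (2 * V./2 + 1)%N by lia.
  move: EN; rewrite hN hU hV; set a := N./2; set b := U./2; set c := V./2.
  move=> EN; have : (4 * (a * a) = 4 * (b * b) + 4 * b + 4 * (c * c) + 4 * c + 2)%N.
    by apply: etrans (etrans _ EN) _; ring.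
  lia.
- have [m [k [h1 h2]]] := pyth_nat _ _ _ oU EN cUV.
  have h1' : Posz U + Posz k * Posz k = Posz m * Posz m by lia.
  have h2' : Posz V = 2 * Posz m * Posz k by lia.
  case: hu => ->; case: hv => ->.
  + exists (Posz m), (Posz k); left; split; lia.
  + exists (Posz m), (- Posz k); left; split; lia.
  + exists (Posz k), (Posz m); left; split; lia.
  + exists (Posz k), (- Posz m); left; split; lia.
- have [m [k [h1 h2]]] := pyth_nat _ _ _ oV (etrans EN (addnC _ _)) (etrans (coprime_sym _ _) cUV).
  have h1' : Posz V + Posz k * Posz k = Posz m * Posz m by lia.
  have h2' : Posz U = 2 * Posz m * Posz k by lia.
  case: hu => ->; case: hv => ->.
  + exists (Posz m), (- Posz k); right; split; lia.
  + exists (Posz k), (- Posz m); right; split; lia.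
  + exists (Posz m), (Posz k); right; split; lia.
  + exists (Posz k), (Posz m); right; split; lia.
- exfalso.
  have : (2 %| gcdn U V)%N by rewrite dvdn_gcd !dvdn2 oU oV.
  by rewrite (eqP cUV).
Qed.

Lemma zEuclid {p : nat} {a b : int} : prime p -> (Posz p %| a * b)%Z ->
  (Posz p %| a)%Z \/ (Posz p %| b)%Z.
Proof. by move=> pp; rewrite !dvdzE abszM Euclid_dvdM // => /orP. Qed.

Lemma zdvd1 {p : nat} : prime p -> ~~ (Posz p %| 1)%Z.
Proof. move=> pp; rewrite dvdz1 /=; have := prime_gt1 pp; lia. Qed.

Lemma nodiv_e {p : nat} {e f : int} : prime p -> (p %% 4 = 1)%N ->
  Posz p = e * e + 4 * (f * f) -> ~~ (Posz p %| e)%Z.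
Proof.
move=> pp p4 hp; apply/negP => /dvdzP [q hq].
have h4 : (Posz p %| 4 * (f * f))%Z.
  have -> : 4 * (f * f) = Posz p - e * e by rewrite hp; ring.
  by rewrite hq rpredB // ?dvdz_mull // dvdzz.
have p2 : (p > 2)%N by have := prime_gt1 pp; lia.
have nd2 : ~~ (Posz p %| 2)%Z by rewrite dvdzE /=; apply/negP => /dvdn_leq; lia.
have : (Posz p %| f)%Z.
  have [H|H] := zEuclid pp h4.
    have H22 : (Posz p %| 2 * 2)%Z by [].
    by have [H'|H'] := zEuclid pp H22; rewrite H' in nd2.
  by have [] := zEuclid pp H.
move=> /dvdzP [r hr].
have : Posz p * (1 - Posz p * (q * q + 4 * (r * r))) = 0.
  have -> : Posz p * (1 - Posz p * (q * q + 4 * (r * r))) =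
     Posz p - (q * p) * (q * p) - 4 * ((r * p) * (r * p)) by ring.
  by rewrite -hq -hr hp; ring.
move/eqP; rewrite mulf_eq0 => /orP [|]; first by have := prime_gt1 pp; lia.
rewrite subr_eq0 => /eqP h1.
have : (Posz p %| Posz p * (q * q + 4 * (r * r)))%Z by rewrite dvdz_mulr // dvdzz.
rewrite -h1.
by rewrite (negbTE (zdvd1 pp)).
Qed.

Lemma split_prime {p : nat} {e f x : int} : prime p -> (p %% 4 = 1)%N ->
  Posz p = e * e + 4 * (f * f) -> (Posz p %| x * x + 1)%Z ->
  exists F, (F = f \/ F = - f) /\ (Posz p %| x * e + 2 * F)%Z /\
            (Posz p %| e - 2 * F * x)%Z.
Proof.
move=> pp p4 hp hx.
have ne := nodiv_e pp p4 hp.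
have h1 : (Posz p %| (2 * f * x - e) * (2 * f * x + e))%Z.
  have -> : (2 * f * x - e) * (2 * f * x + e) = (x * x + 1) * (4 * (f * f)) - Posz p
    by rewrite hp; ring.
  by rewrite rpredB // ?dvdz_mulr // dvdzz.
have [H|H] := zEuclid pp h1.
- exists f; split; first by left.
  split; last by rewrite (_ : e - 2 * f * x = - (2 * f * x - e)); [rewrite rpredN | ring].
  have : (Posz p %| e * (x * e + 2 * f))%Z.
    have -> : e * (x * e + 2 * f) = x * Posz p - 2 * f * (2 * f * x - e) by rewrite hp; ring.
    by rewrite rpredB // ?dvdz_mull // dvdz_mulr // dvdzz.
  by move=> /(zEuclid pp) [H'|//]; rewrite H' in ne.
- exists (- f); split; first by right.
  split; last by rewrite (_ : e - 2 * - f * x = 2 * f * x + e) //; ring.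
  have : (Posz p %| e * (x * e + 2 * - f))%Z.
    have -> : e * (x * e + 2 * - f) = x * Posz p - 2 * f * (2 * f * x + e) by rewrite hp; ring.
    by rewrite rpredB // ?dvdz_mull // dvdz_mulr // dvdzz.
  by move=> /(zEuclid pp) [H'|//]; rewrite H' in ne.
Qed.

Lemma core (p1 p2 : nat) (e f g h x y : int) : prime p1 -> prime p2 -> p1 != p2 ->
  (p1 %% 4 = 1)%N -> (p2 %% 4 = 1)%N ->
  Posz p1 = e * e + 4 * (f * f) -> Posz p2 = g * g + 4 * (h * h) ->
  x * x + 1 = 2 * Posz p1 * Posz p2 * (y * y) ->
  exists F H u v P Q : int, (F = f \/ F = - f) /\ (H = h \/ H = - h) /\
   x = (u - v) * (e * g - 4 * F * H) - (u + v) * (2 * e * H + 2 * F * g) /\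
   1 = (u - v) * (2 * e * H + 2 * F * g) + (u + v) * (e * g - 4 * F * H) /\
   u * P + v * Q = 1 /\ u * u + v * v = y * y.
Proof.
move=> pp1 pp2 p12 p14 p24 hp1 hp2 E.
have d1 : (Posz p1 %| x * x + 1)%Z.
  by rewrite E (_ : 2 * Posz p1 * Posz p2 * (y * y) = Posz p1 * (2 * Posz p2 * (y * y))) ?dvdz_mulr ?dvdzz //; ring.
have d2 : (Posz p2 %| x * x + 1)%Z.
  by rewrite E (_ : 2 * Posz p1 * Posz p2 * (y * y) = Posz p2 * (2 * Posz p1 * (y * y))) ?dvdz_mulr ?dvdzz //; ring.
have [F [hF [dF1 dF2]]] := split_prime pp1 p14 hp1 d1.
have [H [hH [dH1 dH2]]] := split_prime pp2 p24 hp2 d2.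
have hp1' : Posz p1 = e * e + 4 * (F * F) by case: hF => ->; rewrite hp1 //; ring.
have hp2' : Posz p2 = g * g + 4 * (H * H) by case: hH => ->; rewrite hp2 //; ring.
exists F, H.
set a1 := x * e + 2 * F; set a2 := e - 2 * F * x.
set b1 := x * g + 2 * H; set b2 := g - 2 * H * x.
set C1 := a1 * g + 2 * H * a2; set C2 := a2 * g - 2 * H * a1.
have eC1 : C1 = b1 * e + 2 * F * b2 by rewrite /C1 /a1 /a2 /b1 /b2; ring.
have eC2 : C2 = b2 * e - 2 * F * b1 by rewrite /C2 /a1 /a2 /b1 /b2; ring.
have cop : coprimez (Posz p1) (Posz p2).
  rewrite /coprimez /gcdz /=.
  by change (coprime p1 p2); rewrite prime_coprime // dvdn_prime2.
have dC1 : (Posz p1 * Posz p2 %| C1)%Z.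
  rewrite Gauss_dvdz //; apply/andP; split.
    by rewrite /C1 rpredD //; [apply: dvdz_mulr | apply: dvdz_mull].
  by rewrite eC1 rpredD //; [apply: dvdz_mulr | apply: dvdz_mull].
have dC2 : (Posz p1 * Posz p2 %| C2)%Z.
  rewrite Gauss_dvdz //; apply/andP; split.
    by rewrite /C2 rpredB //; [apply: dvdz_mulr | apply: dvdz_mull].
  by rewrite eC2 rpredB //; [apply: dvdz_mulr | apply: dvdz_mull].
have [c1 hc1] := dvdzP dC1.
have [c2 hc2] := dvdzP dC2.
set K := Posz p1 * Posz p2.
have K0 : K != 0 by rewrite /K mulf_eq0 negb_or; have := prime_gt1 pp1; have := prime_gt1 pp2; lia.
set B1 := e * g - 4 * F * H; set B2 := 2 * e * H + 2 * F * g.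
have ex : x = c1 * B1 - c2 * B2.
  apply: (mulfI K0).
  have -> : K * (c1 * B1 - c2 * B2) = (c1 * K) * B1 - (c2 * K) * B2 by ring.
  rewrite -hc1 -hc2 /K hp1' hp2' /C1 /C2 /a1 /a2 /B1 /B2; ring.
have e1 : 1 = c1 * B2 + c2 * B1.
  apply: (mulfI K0).
  have -> : K * (c1 * B2 + c2 * B1) = (c1 * K) * B2 + (c2 * K) * B1 by ring.
  rewrite -hc1 -hc2 /K hp1' hp2' /C1 /C2 /a1 /a2 /B1 /B2; ring.
have Nc : c1 * c1 + c2 * c2 = 2 * (y * y).
  apply: (mulfI K0).
  have -> : K * (2 * (y * y)) = x * x + 1 by rewrite E /K; ring.
  have -> : x * x + 1 = (c1*B1 - c2*B2)*(c1*B1 - c2*B2) + (c1*B2+c2*B1)*(c1*B2+c2*B1)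
    by rewrite -ex -e1 mulr1.
  rewrite /K hp1' hp2' /B1 /B2; ring.
set u := ((c1 + c2) %/ 2)%Z.
have hu : c1 + c2 = 2 * u.
  have := divz_eq (c1 + c2) 2; have := modz_ge0 (c1 + c2) (_ : 2 != 0) => //.
  have := ltz_pmod (c1 + c2) (_ : 0 < 2) => //.
  rewrite -/u; set r := ((c1 + c2) %% 2)%Z => r2 r0 eq.
  have [r0'|r1] : r = 0 \/ r = 1 by clear -r2 r0; lia.
    by rewrite eq r0'; ring.
  exfalso.
  have eq2 : c2 = u * 2 + 1 - c1 by rewrite r1 in eq; rewrite -eq; ring.
  have : 2 * (c1 * c1) - 4 * (u * c1) - 2 * c1 + 4 * (u * u) + 4 * u + 1 = 2 * (y * y).
    by rewrite -Nc eq2; ring.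
  move=> H0; clear -H0; lia.
exists u, (u - c1), (B1 + B2), (B1 - B2).
split; first by [].
split; first by [].
split; first by rewrite ex (_ : c2 = 2 * u - c1); [ring | clear -hu; lia].
split; first by rewrite e1 (_ : c2 = 2 * u - c1); [ring | clear -hu; lia].
split; first by rewrite e1 (_ : c2 = 2 * u - c1); [ring | clear -hu; lia].
have : 2 * (u * u + (u - c1) * (u - c1)) = 2 * (y * y).
  by rewrite -Nc (_ : c2 = 2 * u - c1); [ring | clear -hu; lia].
move=> H0; clear -H0; lia.
Qed.

Definition G (a b : int) : algC := a%:~R + b%:~R * 'i.

Lemma ielim (X Y Z : algC) : X = Y + Z * ('i ^+ 2 + 1) -> X = Y.
Proof. by rewrite sqrCi addNr mulr0 addr0. Qed.

Lemma GM a b c d : G a b * G c d = G (a * c - b * d) (a * d + b * c).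
Proof. rewrite /G; apply: (@ielim _ _ (b%:~R * d%:~R)); ring. Qed.

Lemma GC a b : (G a b)^* = G a (- b).
Proof.
by rewrite /G (mulrC b%:~R) conjC_rect ?realz // intrN; ring.
Qed.

Lemma finish (S T1 T2 X1 X2 y1 y2 s A1 A2 B1 B2 : algC) :
  T1 + T2 = 2 * S -> T1 ^+ 2 = 2 * X1 -> T2 ^+ 2 = 2 * X2 ->
  X1 = 'i * y1 ^+ 2 * ((1 + s * 'i) * A1 * A2) ->
  X2 = - 'i * y2 ^+ 2 * ((1 - s * 'i) * B1 * B2) -> y1 != 0 -> y2 != 0 ->
  exists w1 w2 : algC, w1 ^+ 2 = (1 + s * 'i) * A1 * A2 /\
    w2 ^+ 2 = (1 - s * 'i) * B1 * B2 /\
    S = 2^-1 * (y1 * (1 + 'i) * w1 + y2 * (1 - 'i) * w2).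
Proof.
move=> hT hT1 hT2 hX1 hX2 y10 y20.
have i0 : ('i : algC) != 0 by apply: neq0Ci.
have sq1 : (1 + 'i : algC) ^+ 2 = 2 * 'i by apply: (@ielim _ _ 1); ring.
have sq2 : (1 - 'i : algC) ^+ 2 = - (2 * 'i) by apply: (@ielim _ _ 1); ring.
have n1 : (1 + 'i : algC) != 0.
  have : (1 + 'i : algC) ^+ 2 != 0 by rewrite sq1 mulf_neq0 ?pnatr_eq0.
  by rewrite expf_eq0.
have n2 : (1 - 'i : algC) != 0.
  have : (1 - 'i : algC) ^+ 2 != 0 by rewrite sq2 oppr_eq0 mulf_neq0 ?pnatr_eq0.
  by rewrite expf_eq0.
exists (T1 / ((1 + 'i) * y1)), (T2 / ((1 - 'i) * y2)); split; [|split].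
- rewrite expr_div_n hT1 hX1 exprMn sq1; field.
  by rewrite i0 y10.
- rewrite expr_div_n hT2 hX2 exprMn sq2; field.
  by rewrite i0 y20.
- have -> : S = 2^-1 * (T1 + T2) by rewrite hT mulrA mulVf ?mul1r // pnatr_eq0.
  congr (_ * _); field.
  by rewrite n1 n2 y10 y20.
Qed.

Lemma Aint_sq (z : algC) (c : int) : z ^+ 2 = c%:~R -> z \in Aint.
Proof.
move=> hz; apply: (@root_monic_Aint ('X^2 - (c%:~R)%:P)).
- by rewrite /root !hornerE hz subrr.
- exact: monicXnsubC.
- by rewrite polyOverXnsubC intr_int.
Qed.

Lemma Aint_rat (z : algC) (q : rat) : z \in Aint -> z = ratr q -> exists m : int, z = m%:~R.
Proof.
move=> hA hq; have : z \is a Num.int by apply: Cint_rat_Aint => //; rewrite hq Crat_rat.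
by move/intrP.
Qed.

Lemma elim0 (X Y Z W : algC) : W = 0 -> X = Y + Z * W -> X = Y.
Proof. by move=> -> ->; rewrite mulr0 addr0. Qed.

Lemma par (z : int) : exists k, z = 2 * k \/ z = 2 * k + 1.
Proof.
exists (z %/ 2)%Z; have := divz_eq z 2; have := modz_ge0 z (_ : 2 != 0) => //.
have := ltz_pmod z (_ : 0 < 2) => //. lia.
Qed.

Lemma odd_mul {a b ka kb : int} : a = 2 * ka + 1 -> b = 2 * kb + 1 ->
  a * b = 2 * (2 * ka * kb + ka + kb) + 1.
Proof. by move=> -> ->; ring. Qed.

Lemma oddp {p : nat} : (p %% 4 = 1)%N -> Posz p = 2 * (2 * Posz (p %/ 4)%N) + 1.
Proof. move=> h; have : (p = 4 * (p %/ 4) + 1)%N by lia. lia. Qed.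

Lemma dd (p1 p2 : nat) (m k : int) : prime p1 -> prime p2 -> p1 != p2 ->
  (p1 %% 4 = 1)%N -> (p2 %% 4 = 1)%N ->
  m * m = 2 * Posz p1 * Posz p2 * k -> (2 * Posz p1 * Posz p2 %| m)%Z.
Proof.
move=> pp1 pp2 p12 p14 p24 E.
have d1 : (Posz p1 %| m)%Z.
  have : (Posz p1 %| m * m)%Z.
    by rewrite E (_ : 2 * Posz p1 * Posz p2 * k = Posz p1 * (2 * Posz p2 * k)) ?dvdz_mulr ?dvdzz //; ring.
  by move/(zEuclid pp1) => [].
have d2 : (Posz p2 %| m)%Z.
  have : (Posz p2 %| m * m)%Z.
    by rewrite E (_ : 2 * Posz p1 * Posz p2 * k = Posz p2 * (2 * Posz p1 * k)) ?dvdz_mulr ?dvdzz //; ring.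
  by move/(zEuclid pp2) => [].
have d0 : (Posz 2 %| m)%Z.
  have : (Posz 2 %| m * m)%Z.
    by rewrite E (_ : 2 * Posz p1 * Posz p2 * k = Posz 2 * (Posz p1 * Posz p2 * k)) ?dvdz_mulr ?dvdzz //; ring.
  by move/(zEuclid (isT : prime 2)) => [].
have o1 : odd p1.
  have -> : p1 = (2 * (2 * (p1 %/ 4)) + 1)%N by lia.
  by rewrite oddD oddM.
have o2 : odd p2.
  have -> : p2 = (2 * (2 * (p2 %/ 4)) + 1)%N by lia.
  by rewrite oddD oddM.
have c12 : coprime p1 p2 by rewrite prime_coprime // dvdn_prime2.
have c21 : coprime 2 p1 by rewrite prime_coprime // dvdn_prime2 //; apply/eqP => h; rewrite -h in o1.
have c22 : coprime 2 p2 by rewrite prime_coprime // dvdn_prime2 //; apply/eqP => h; rewrite -h in o2.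
rewrite Gauss_dvdz; last by change (coprime (2 * p1) p2); rewrite coprimeMl c22 c12.
by rewrite d2 Gauss_dvdz ?d0 ?d1 //; change (coprime 2 p1).
Qed.

Lemma elim2 (X Y Z1 W1 Z2 W2 : algC) : W1 = 0 -> W2 = 0 -> X = Y + Z1 * W1 + Z2 * W2 -> X = Y.
Proof. by move=> -> -> ->; rewrite !mulr0 !addr0. Qed.

Lemma stepA (p1 p2 : nat) (D : int) (eps : algC) (a b : rat) :
  prime p1 -> prime p2 -> p1 != p2 -> (p1 %% 4 = 1)%N -> (p2 %% 4 = 1)%N ->
  D = 2 * Posz p1 * Posz p2 ->
  eps \in Aint -> eps^-1 \in Aint -> eps != 0 ->
  eps = ratr a + ratr b * sqrtC D%:~R -> a ^+ 2 - D%:~R * b ^+ 2 = -1 ->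
  exists x y : int, x * x + 1 = 2 * Posz p1 * Posz p2 * (y * y) /\
    eps - eps^-1 = 2 * x%:~R.
Proof.
move=> pp1 pp2 p12 p14 p24 hD epsA epsiA eps0 heps hn.
set s := sqrtC (D%:~R : algC).
have hs : s ^+ 2 - D%:~R = 0 by rewrite sqrtCK subrr.
have sA : s \in Aint by apply: (@Aint_sq _ D); rewrite sqrtCK.
move: heps; rewrite -/s => heps; clearbody s.
set al := (ratr a : algC); set be := (ratr b : algC).
have hn' : al ^+ 2 - D%:~R * be ^+ 2 + 1 = 0.
  have := congr1 (ratr : rat -> algC) hn.
  rewrite rmorphB rmorphM !rmorphXn /= ratr_int rmorphN rmorph1 -/al -/be => ->.
  by rewrite addNr.
have h1 : eps * (be * s - al) = 1.
  rewrite heps -/al -/be; apply: (@elim2 _ _ (be ^+ 2) _ (-1) _ hs hn'); ring.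
have hinv : eps^-1 = be * s - al by rewrite -[eps^-1]mulr1 -h1 mulKf.
have h2a : eps - eps^-1 = 2 * al by rewrite hinv heps; ring.
have [A hA] : exists A : int, 2 * al = A%:~R.
  apply: (@Aint_rat _ (2 * a)); first by rewrite -h2a rpredB.
  by rewrite rmorphM rmorph_nat.
have hb : (eps + eps^-1) * s = 2 * be * D%:~R.
  rewrite hinv heps; apply: (@elim0 _ _ (2 * be) _ hs); ring.
have [m hm] : exists m : int, 2 * be * D%:~R = m%:~R.
  apply: (@Aint_rat _ (2 * b * D%:~R)); first by rewrite -hb rpredM // rpredD.
  by rewrite !rmorphM rmorph_nat /= ratr_int.
have Em : m * m = D * (A * A + 4).
  apply: (@intr_inj algC); rewrite rmorphM rmorphM rmorphD rmorphM /= -hm -hA.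
  apply: (@elim0 _ _ (- 4 * D%:~R) _ hn'); rewrite rmorph_nat; ring.
have [t ht] : exists t, m = t * D.
  by apply/dvdzP; rewrite hD; apply: (@dd p1 p2 m (A * A + 4) pp1 pp2 p12 p14 p24); rewrite Em hD.
have D0 : D != 0 by rewrite hD; have := prime_gt1 pp1; have := prime_gt1 pp2; lia.
have Et : t * t * D = A * A + 4.
  apply: (mulfI D0); rewrite -Em ht; ring.
rewrite hD in Et.
have [k [hk|hk]] := par A; last first.
  exfalso; have : 4 * (k * k) + 4 * k + 5 = 2 * (Posz p1 * Posz p2 * (t * t)).
    transitivity (A * A + 4); first by rewrite hk; ring.
    by rewrite -Et; ring.
  move=> H0; clear -H0; lia.
have Ek : 2 * (k * k) + 2 = Posz p1 * Posz p2 * (t * t).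
  apply: (@mulfI _ 2) => //.
  transitivity (A * A + 4); first by rewrite hk; ring.
  by rewrite -Et; ring.
have [y [hy|hy]] := par t; last first.
  exfalso.
  have o12 := odd_mul (oddp p14) (oddp p24).
  have ott := odd_mul hy hy.
  have o := odd_mul o12 ott.
  move: Ek; rewrite o => H0; clear -H0; lia.
exists k, y; split.
  apply: (@mulfI _ 2) => //.
  transitivity (2 * (k * k) + 2); first by ring.
  by rewrite Ek hy; ring.
by rewrite h2a hA hk rmorphM /=.
Qed.

Lemma cM (a b : algC) : (a * b)^* = a^* * b^*.
Proof. exact: rmorphM. Qed.

Lemma cX (a : algC) : (a ^+ 2)^* = (a^*) ^+ 2.
Proof. exact: rmorphXn. Qed.

Lemma gaussG a b : gauss_int (G a b).
Proof. by exists a, b. Qed.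

Lemma Gnz (x s : int) : s * s = 1 -> G x s != 0.
Proof.
move=> hs; apply/eqP => h.
have : G x s * G x (- s) = 0 by rewrite h mul0r.
rewrite GM /G => /eqP.
have -> : x * - s + s * x = 0 by ring.
rewrite mulr0z mul0r addr0 intr_eq0 => /eqP.
have := sqr_ge0 x; rewrite expr2 => hx.
have -> : x * x - s * - s = x * x + s * s by ring.
rewrite hs; lia.
Qed.

Lemma pack (S T1 T2 X1 X2 y1 y2 s q1 q2 q3 q4 A2 B2 : algC) :
  gauss_int y1 -> gauss_int y2 -> (s = 1 \/ s = -1) ->
  T1 + T2 = 2 * S -> T1 ^+ 2 = 2 * X1 -> T2 ^+ 2 = 2 * X2 ->
  X1 != 0 -> X2 != 0 ->
  X1 = 'i * y1 ^+ 2 * ((1 + s * 'i) * q1 * A2) ->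
  X2 = - 'i * y2 ^+ 2 * ((1 - s * 'i) * q2 * B2) ->
  (A2 = q3 /\ B2 = q4 \/ A2 = q4 /\ B2 = q3) ->
  exists y1 y2 : algC, gauss_int y1 /\ gauss_int y2 /\
  exists s : algC, (s = 1 \/ s = -1) /\
  exists w1 w2 : algC,
    (w1 ^+ 2 = (1 + s * 'i) * q1 * q3 /\ w2 ^+ 2 = (1 - s * 'i) * q2 * q4 /\
     S = 2^-1 * (y1 * (1 + 'i) * w1 + y2 * (1 - 'i) * w2))
    \/
    (w1 ^+ 2 = (1 + s * 'i) * q1 * q4 /\ w2 ^+ 2 = (1 - s * 'i) * q2 * q3 /\
     S = 2^-1 * (y1 * (1 + 'i) * w1 + y2 * (1 - 'i) * w2)).
Proof.
move=> g1 g2 hs hT hT1 hT2 X10 X20 hX1 hX2 hAB.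
have y10 : y1 != 0.
  by apply/eqP => h; move: X10; rewrite hX1 h expr0n /= mulr0 mul0r eqxx.
have y20 : y2 != 0.
  by apply/eqP => h; move: X20; rewrite hX2 h expr0n /= mulr0 mul0r eqxx.
have [w1 [w2 [h1 [h2 h3]]]] := finish _ _ _ _ _ _ _ _ _ _ _ _ hT hT1 hT2 hX1 hX2 y10 y20.
exists y1, y2; split => //; split => //; exists s; split => //; exists w1, w2.
by case: hAB => [[<- <-]|[<- <-]]; [left|right].
Qed.

Lemma Wform (W : algC) : W = 1 \/ W = 'i -> exists s : algC, (s = 1 \/ s = -1) /\
  G 1 1 * W = 'i * (1 + s * 'i) /\ G 1 (-1) * W^* = - 'i * (1 - s * 'i).
Proof.
case=> ->.
- exists (-1); split; first by right.
  rewrite conjC1 /G; split; apply: (@ielim _ _ 1); ring.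
- exists 1; split; first by left.
  rewrite conjCi /G; split; apply: (@ielim _ _ 0); ring.
Qed.

Theorem lemma41 (p1 p2 : nat) (e f g h : int) (eps : algC) :
  prime p1 -> prime p2 -> p1 != p2 ->
  (p1 %% 4 = 1)%N -> (p2 %% 4 = 1)%N ->
  (p1%:Z = e ^+ 2 + 4 * f ^+ 2) -> (p2%:Z = g ^+ 2 + 4 * h ^+ 2) ->
  let d : int := (2 * p1 * p2)%N%:Z in
  let pi1 : algC := e%:~R + 2 * f%:~R * 'i in
  let pi2 : algC := e%:~R - 2 * f%:~R * 'i in
  let pi3 : algC := g%:~R + 2 * h%:~R * 'i in
  let pi4 : algC := g%:~R - 2 * h%:~R * 'i in
  fundamental_unit d eps ->
  Qsqrt_norm_is d eps (-1) ->
  exists y1 y2 : algC, gauss_int y1 /\ gauss_int y2 /\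
  exists s : algC, (s = 1 \/ s = -1) /\
  exists w1 w2 : algC,
    (w1 ^+ 2 = (1 + s * 'i) * pi1 * pi3 /\ w2 ^+ 2 = (1 - s * 'i) * pi2 * pi4 /\
     sqrtC eps = 2^-1 * (y1 * (1 + 'i) * w1 + y2 * (1 - 'i) * w2))
    \/
    (w1 ^+ 2 = (1 + s * 'i) * pi1 * pi4 /\ w2 ^+ 2 = (1 - s * 'i) * pi2 * pi3 /\
     sqrtC eps = 2^-1 * (y1 * (1 + 'i) * w1 + y2 * (1 - 'i) * w2)).
Proof.
move=> pp1 pp2 p12 p14 p24 hp1 hp2 d pi1 pi2 pi3 pi4
  [[_ [epsA [eps0 epsiA]]] _] [a [b [heps hn]]].
have hp1' : Posz p1 = e * e + 4 * (f * f) by rewrite hp1 !expr2.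
have hp2' : Posz p2 = g * g + 4 * (h * h) by rewrite hp2 !expr2.
have hD : d = 2 * Posz p1 * Posz p2 by rewrite /d !PoszM.
have [x [y [Exy Heps]]] := @stepA p1 p2 d eps a b pp1 pp2 p12 p14 p24 hD epsA epsiA eps0 heps hn.
have [F [H [u [v [P [Q [hF [hH [ex [e1 [Bz Nuv]]]]]]]]]]] :=
  @core p1 p2 e f g h x y pp1 pp2 p12 p14 p24 hp1' hp2' Exy.
have [r [t [W [hW hGW]]]] : exists r t W, (W = 1 \/ W = 'i) /\
    G x 1 = G 1 1 * W * G r t ^+ 2 * G e (2 * F) * G g (2 * H).
  have [r [t [[hu hv]|[hu hv]]]] := pyth_int _ _ _ _ _ Bz Nuv.
  - exists r, t, 1; split; first by left.
    rewrite mulr1 expr2 !GM; congr G.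
      by rewrite ex hu hv; ring.
    by apply: (etrans e1); rewrite hu hv; ring.
  - exists r, t, 'i; split; first by right.
    have -> : ('i : algC) = G 0 1 by rewrite /G; ring.
    rewrite expr2 !GM; congr G.
      by rewrite ex hu hv; ring.
    by apply: (etrans e1); rewrite hu hv; ring.
have hGc : G x (-1) = G 1 (-1) * W^* * G r (- t) ^+ 2 * G e (- (2 * F)) * G g (- (2 * H)).
  have := congr1 (fun z => z^*) hGW; rewrite /= !cM !GC => ->.
  by rewrite ?expr2.
have [s [hs [hW1 hW2]]] := Wform _ hW.
set S := sqrtC eps.
have S0 : S != 0 by rewrite sqrtC_eq0.
have hR : S * S^-1 - 1 = 0 by rewrite mulfV // subrr.
have hI : ('i : algC) ^+ 2 + 1 = 0 by rewrite sqrCi addNr.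
have hx : S ^+ 2 - (S^-1) ^+ 2 = 2 * x%:~R by rewrite exprVn sqrtCK.
set Tp := S + 'i * S^-1; set Tm := S - 'i * S^-1.
have hsum : Tp + Tm = 2 * S by rewrite /Tp /Tm; ring.
have hsum' : Tm + Tp = 2 * S by rewrite addrC.
have hTp : Tp ^+ 2 = 2 * G x 1.
  apply: (@elim2 _ _ (2 * 'i) _ ((S^-1) ^+ 2) _ hR hI).
  rewrite (_ : 2 * G x 1 = S ^+ 2 - (S^-1) ^+ 2 + 2 * 'i); first by rewrite /Tp; ring.
  by rewrite hx /G; ring.
have hTm : Tm ^+ 2 = 2 * G x (-1).
  apply: (@elim2 _ _ (- 2 * 'i) _ ((S^-1) ^+ 2) _ hR hI).
  rewrite (_ : 2 * G x (-1) = S ^+ 2 - (S^-1) ^+ 2 - 2 * 'i); first by rewrite /Tm; ring.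
  by rewrite hx /G; ring.
have n1 : G x 1 != 0 by apply: Gnz.
have n2 : G x (-1) != 0 by apply: Gnz.
have hp3 : H = h -> G g (2 * H) = pi3 /\ G g (- (2 * H)) = pi4.
  by move=> ->; rewrite /G /pi3 /pi4; split; ring.
have hp4 : H = - h -> G g (2 * H) = pi4 /\ G g (- (2 * H)) = pi3.
  by move=> ->; rewrite /G /pi3 /pi4; split; ring.
have isq : forall z : algC, ('i * z) ^+ 2 = - z ^+ 2.
  by move=> z; rewrite exprMn sqrCi mulN1r.
case: hF => hF.
- have E1 : G e (2 * F) = pi1 by rewrite hF /G /pi1; ring.
  have E2 : G e (- (2 * F)) = pi2 by rewrite hF /G /pi2; ring.
  rewrite E1 in hGW; rewrite E2 in hGc.
  apply: (@pack S Tp Tm (G x 1) (G x (-1)) (G r t) (G r (- t)) s pi1 pi2 pi3 pi4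
     (G g (2 * H)) (G g (- (2 * H)))) => //; try exact: gaussG.
  + by rewrite hGW -mulrA hW1; ring.
  + by rewrite hGc -mulrA hW2; ring.
  + case: hH => hH.
      by have [-> ->] := hp3 hH; left.
    by have [-> ->] := hp4 hH; right.
- have E1 : G e (2 * F) = pi2 by rewrite hF /G /pi2; ring.
  have E2 : G e (- (2 * F)) = pi1 by rewrite hF /G /pi1; ring.
  rewrite E1 in hGW; rewrite E2 in hGc.
  apply: (@pack S Tm Tp (G x (-1)) (G x 1) ('i * G r (- t)) ('i * G r t) (- s)
     pi1 pi2 pi3 pi4 (G g (- (2 * H))) (G g (2 * H))) => //.
  + have -> : ('i : algC) * G r (- t) = G t r.
      by rewrite /G; apply: (@ielim _ _ (- t%:~R)); ring.
    exact: gaussG.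
  + have -> : ('i : algC) * G r t = G (- t) r.
      by rewrite /G; apply: (@ielim _ _ (t%:~R)); ring.
    exact: gaussG.
  + by case: hs => ->; [right|left]; rewrite ?opprK.
  + by rewrite isq hGc -mulrA hW2; ring.
  + by rewrite isq hGW -mulrA hW1; ring.
  + case: hH => hH.
      by have [-> ->] := hp3 hH; right.
    by have [-> ->] := hp4 hH; left.
Qed.
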